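(* Let $n,k\in\mathbb N$ with $k\ge 2$, and let $b=n^k+1$. Then for every $m\in\{2,3,\dots,n\}$, the number $(m\cdot n)^k$ is antipalindromic in base $b$.
   Context: For an integer $b\ge 2$, every natural number $x$ has a unique base-$b$ expansion $x=a_\ell b^\ell+\dots+a_1b+a_0$ with $a_0,\dots,a_\ell\in\{0,1,\dots,b-1\}$ and $a_\ell\neq 0$. The number $x$ is antipalindromic in base $b$ if $a_j=b-1-a_{\ell-j}$ for all $j\in\{0,1,\dots,\ell\}$. *)

(* Defs.v *)
From mathcomp Require Import all_boot.
Set Implicit Arguments. Unset Strict Implicit. Unset Printing Implicit Defensive.

Definition is_base_expansion (b x : nat) (s : seq nat) : Prop :=
  [/\ size s > 0,
      all (fun a => a < b) s,
      last 0 s != 0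
    & x = \sum_(j < size s) nth 0 s j * b ^ j].

Definition antipalindromic (b x : nat) : Prop :=
  exists s : seq nat, is_base_expansion b x s /\
    forall j, j < size s ->
      nth 0 s j = b - 1 - nth 0 s ((size s).-1 - j).

(* Main.v *)
Require Import Defs.
From mathcomp Require Import all_boot.
From mathcomp Require Import zify.

Theorem mainTheorem11 (n k : nat) :
  2 <= k ->
  forall m : nat, 2 <= m <= n ->
    antipalindromic (n ^ k + 1) ((m * n) ^ k).
Proof.
move=> hk m /andP [hm2 hmn].
have hMN : m ^ k <= n ^ k by rewrite leq_exp2r //; lia.
have hM2 : 2 <= m ^ k.
  have h : m ^ 1 <= m ^ k by apply: leq_pexp2l; lia.
  rewrite expn1 in h; lia.
exists [:: n ^ k + 1 - m ^ k; m ^ k - 1]; split.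
  split => //=.
  - apply/andP; split; first lia. apply/andP; split => //; lia.
  - lia.
  - rewrite big_ord_recr /= big_ord_recr /= big_ord0 expnMn.
    rewrite expn0 expn1; nia.
case=> [|[|j]] //= _; lia.
Qed.
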